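(* Let $m\in\mathbb{Z}_{>0}$, let $X$ be a finite set with $|X|=2m$, $S=\{0,1\}^X$ and $B=\{-1,1\}^X$. Then for every $\varepsilon,\delta\ge0$, $\#\mathsf{CorM}(S,B,\varepsilon,\delta)=0$. However, for the uniform distribution $\mu_X$ over $X$ and every $\varepsilon,\delta\in(0,1/2)$, $\#\mathsf{DCorM}^{\mu_X}(B,S,\varepsilon,\delta)\ge(1/2-\varepsilon)m$.
   Context: Generalized product: $u_1\diamondsuit u_2=u_1u_2$ if $u_2\in[-1,1]$, $-|u_1|$ if $u_2=*$ (here all hypotheses are total). Learners take $n$ points of $X\times[-1,1]$ and output $f:X\to\{-1,1\}$ (possibly randomized). $\mathsf{CorM}_n(S,B,\varepsilon,\delta)$: for every distribution $\mu$ on $X\times[-1,1]$ for which some $s\in S$ has $\Pr_{x\sim\mu|_X}[s(x)\ne*]=1$ and $\mathbb{E}_\mu[y|x]=s(x)$, with probability $\ge1-\delta$ over $n$ i.i.d. samples, $\mathbb{E}_\mu[yf(x)]\ge\sup_{b\in B}\mathbb{E}_\mu[y\diamondsuit b(x)]-\varepsilon$. $\mathsf{DCorM}^{\mu_X}_n(S,B,\varepsilon,\delta)$: the same guarantee but only required for distributions $\mu$ with $\mu|_X=\mu_X$ and $\Pr_\mu[s(x)=y]=1$ for some $s\in S$. $\#\mathsf{CorM}$, $\#\mathsf{DCorM}^{\mu_X}$ are the least $n$ for which such a learner exists. *)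

(* Defs.v *)
From HB Require Import structures.
From mathcomp Require Import all_boot all_order all_algebra.
From mathcomp Require Import all_classical all_reals all_analysis.
Set Implicit Arguments. Unset Strict Implicit. Unset Printing Implicit Defensive.
Import Order.TTheory GRing.Theory Num.Theory.
Local Open Scope classical_set_scope.
Local Open Scope ring_scope.

Section Learning.
Variables (R : realType) (X : finType).

(* A distribution mu on X x [-1,1], X finite, written as its marginal on X
   (px) together with the conditional law of y given x (py x), i.e.
   mu = sum_x px x * (dirac x (x) py x). *)
Record dist := Dist { px : X -> R ; py : X -> probability R R }.

Definition is_dist (mu : dist) : Prop :=
  (forall x, 0 <= px mu x) /\ (\sum_(x : X) px mu x = 1) /\
  (forall x, py mu x [set y : R | -1 <= y <= 1] = 1%E).

(* Hypotheses X -> [-1,1] u {*}; None stands for *. *)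
Definition hyp := X -> option R.

Definition gprod (u1 : R) (u2 : option R) : R :=
  match u2 with Some u => u1 * u | None => - `|u1| end.

Definition expect (mu : dist) (g : X -> R -> R) : \bar R :=
  \sum_(x : X) (px mu x)%:E * \int[py mu x]_y (g x y)%:E.

Definition gcorr (mu : dist) (b : hyp) : \bar R := expect mu (fun x y => gprod y (b x)).

(* A randomized hypothesis f : X -> {-1,1} is represented by its mean
   h x = E[f x] in [-1,1]; E_mu[y f(x)] = E_mu[y h(x)]. *)
Definition corr (mu : dist) (h : X -> R) : \bar R := expect mu (fun x y => y * h x).

Fixpoint sampleE (mu : dist) (n : nat) (F : seq (X * R) -> \bar R) : \bar R :=
  match n with
  | 0 => F [::]
  | k.+1 => \sum_(x : X) (px mu x)%:E *
             \int[py mu x]_y sampleE mu k (fun s => F ((x, y) :: s))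
  end.

Definition learner := seq (X * R) -> X -> R.
Definition valid_learner (L : learner) : Prop :=
  forall s x, -1 <= L s x <= 1.

Definition success_prob (mu : dist) (n : nat) (L : learner) (B : set hyp)
  (eps : R) : \bar R :=
  sampleE mu n (fun s =>
    (((ereal_sup [set gcorr mu b | b in B] - eps%:E <= corr mu (L s))%E
       : bool)%:R : R)%:E).

Definition realizes (mu : dist) (s : hyp) : Prop :=
  (\sum_(x : X | s x == None) px mu x = 0) /\
  (forall x, 0 < px mu x -> forall v, s x = Some v ->
     (\int[py mu x]_y y%:E = v%:E)%E).

Definition CorM (n : nat) (S B : set hyp) (eps delta : R) : Prop :=
  exists L : learner, valid_learner L /\
    forall mu, is_dist mu -> (exists2 s, S s & realizes mu s) ->
      ((1 - delta)%:E <= success_prob mu n L B eps)%E.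

Definition agree_prob (mu : dist) (s : hyp) : \bar R :=
  \sum_(x : X) (px mu x)%:E * py mu x [set y | s x = Some y].

Definition DCorM (muX : X -> R) (n : nat) (S B : set hyp) (eps delta : R)
  : Prop :=
  exists L : learner, valid_learner L /\
    forall mu, is_dist mu -> (forall x, px mu x = muX x) ->
      (exists2 s, S s & agree_prob mu s = 1%E) ->
      ((1 - delta)%:E <= success_prob mu n L B eps)%E.

Definition least_samples (P : nat -> Prop) (n : nat) : Prop :=
  P n /\ forall k, P k -> (n <= k)%N.

Definition cube01 : set hyp := [set h | forall x, h x = Some 0 \/ h x = Some 1].
Definition cubepm : set hyp := [set h | forall x, h x = Some (-1) \/ h x = Some 1].
Definition unif : X -> R := fun _ => (#|X|%:R)^-1.

End Learning.

(* Main.v *)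
Require Import Defs.
From HB Require Import structures.
From mathcomp Require Import all_boot all_order all_algebra.
From mathcomp Require Import all_classical all_reals all_analysis.
From mathcomp Require Import measurable_realfun ring lra.
Import Order.TTheory GRing.Theory Num.Theory.
Set Implicit Arguments. Unset Strict Implicit. Unset Printing Implicit Defensive.
Local Open Scope ring_scope.
Lemma def_of_fin (R : realType) (a b : \bar R) (v : R) :
  (a - b = v%:E)%E -> (a +? - b)%E.
Proof. by case: a => [a||]; case: b => [b||]. Qed.

Lemma intN_fin (R : realType) (P : probability R R) (v : R) :
  (\int[P]_y y%:E = v%:E)%E -> (\int[P]_y (y * -1)%:E = - v%:E)%E.
Proof.
move=> H.
have -> : (fun y : R => (y * -1)%:E) = (fun y => - (y%:E))%E.
  by apply/funext => y; rewrite mulrN1.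
rewrite integralN; first by rewrite H.
by rewrite integralE in H; exact: def_of_fin H.
Qed.

Lemma part1 (R : realType) (X : finType) (eps delta : R) :
  0 <= eps -> 0 <= delta ->
  least_samples (fun n => CorM n (@cube01 R X) (@cubepm R X) eps delta) 0.
Proof.
move=> e0 d0; split; last by [].
exists (fun (_ : seq (X * R)) (_ : X) => (1 : R)); split.
  move=> _ _ /=; apply/andP; split; [ exact: (le_trans (lerN10 R) ler01) | exact: lexx].
move=> mu [px0 [psum py1]] [s Hs [Hnone Hint]].
rewrite /success_prob /=.
have key : (ereal_sup [set gcorr mu b | b in @cubepm R X] - eps%:E <=
    corr mu (fun _ => 1%R))%E.
  apply: le_trans (geeDl _ _) _; first by rewrite -EFinN lee_fin oppr_le0.
  apply: ge_ereal_sup => _ [b Hb <-].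
  rewrite /gcorr /corr /expect; apply: lee_sum => x _.
  have [px00|pxpos] := eqVneq (px mu x) 0.
    by rewrite px00 !mul0e.
  have pxp : 0 < px mu x by rewrite lt0r pxpos px0.
  apply: lee_wpmul2l; first by rewrite lee_fin px0.
  have [v sv Hv] : exists2 v, s x = Some v & (v = 0 \/ v = 1).
    by case: (Hs x) => ->; [exists 0 | exists 1]; auto.
  have Hi := Hint x pxp v sv.
  have E1 : (fun y : R => (y * 1)%:E) = (fun y => y%:E).
    by apply/funext => y; rewrite mulr1.
  rewrite E1 Hi.
  case: (Hb x) => -> /=; last by rewrite E1 Hi.
  rewrite (@intN_fin _ _ _ Hi) -EFinN lee_fin; case: Hv => ->; lra.
have -> : ((ereal_sup [set gcorr mu b | b in @cubepm R X] - eps%:E <=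
    corr mu (fun _ => 1%R))%E) = true by apply/idP.
by rewrite lee_fin /=; lra.
Qed.
Import HBNNSimple.
Lemma dirac_le (R : realType) (a : R) (f : R -> \bar R) :
  (forall y, (0 <= f y)%E) -> (\int[\d_a]_y f y <= f a)%E.
Proof.
move=> f0; rewrite ge0_integralE//; apply: ge_ereal_sup => _ [h hf <-].
have := hf a; rewrite patch_setT => ha.
rewrite -[X in sintegral _ X](patch_setT (fun=> 0)) -integral_nnsfun//.
rewrite integral_dirac//; last first.
  by apply/measurable_EFinP; exact: measurable_funPT.
by rewrite diracT mul1e.
Qed.

Lemma dirac_int (R : realType) (a : R) (g : R -> R) : measurable_fun setT g ->
  (\int[\d_a]_y (g y)%:E = (g a)%:E)%E.
Proof.
move=> mg; rewrite integral_dirac//; last exact/measurable_EFinP.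
by rewrite diracT mul1e.
Qed.

Definition dprob (R : realType) (a : R) : probability R R := \d_a.

Definition mkdist (R : realType) (X : finType) (lab : X -> R) : dist R X :=
  @Dist R X (@unif R X) (fun x => dprob (lab x)).

Fixpoint Gr (R : realType) (X : finType) (lab : X -> R) (k : nat)
  (F : seq (X * R) -> R) : R :=
  match k with
  | 0 => F [::]
  | k'.+1 => \sum_(x : X) (#|X|%:R)^-1 * Gr lab k' (fun t => F ((x, lab x) :: t))
  end.

Lemma sampleE_ge0 (R : realType) (X : finType) (mu : dist R X) k F :
  (forall x, 0 <= px mu x) -> (forall t, (0 <= F t)%E) -> (0 <= sampleE mu k F)%E.
Proof.
move=> px0; elim: k F => [|k IH] F F0 /=; first exact: F0.
apply: sume_ge0 => x _; apply: mule_ge0; first by rewrite lee_fin.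
by apply: integral_ge0 => y _; apply: IH.
Qed.

Lemma sampleE_le (R : realType) (X : finType) (lab : X -> R) k F :
  (forall t, 0 <= F t) ->
  (sampleE (mkdist lab) k (fun t => (F t)%:E) <= (Gr lab k F)%:E)%E.
Proof.
have px0 : forall x, 0 <= px (mkdist lab) x by move=> x; rewrite /= /unif invr_ge0.
elim: k F => [|k IH] F F0 /=; first exact: lexx.
rewrite -sumEFin; apply: lee_sum => x _; rewrite EFinM.
apply: lee_wpmul2l; first by rewrite lee_fin invr_ge0.
apply: le_trans (IH _ (fun t => F0 _)).
apply: (@dirac_le R (lab x) (fun y => sampleE (mkdist lab) k (fun t => (F ((x, y) :: t))%:E))).
by move=> y; apply: sampleE_ge0 => // t; rewrite lee_fin.
Qed.

Fixpoint allseqs (X : finType) (k : nat) : seq (seq X) :=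
  match k with
  | 0 => [:: [::]]
  | k'.+1 => [seq x :: t | x <- index_enum X, t <- allseqs X k']
  end.

Definition samp (R : realType) (X : finType) (lab : X -> R) (t : seq X) :=
  map (fun x => (x, lab x)) t.

Lemma Gr_closed (R : realType) (X : finType) (lab : X -> R) k F :
  Gr lab k F = \sum_(t <- allseqs X k) (#|X|%:R^-1)^+k * F (samp lab t).
Proof.
elim: k F => [|k IH] F /=; first by rewrite big_seq1 expr0 mul1r.
rewrite big_allpairs_dep /=; apply: eq_bigr => x _.
rewrite IH mulr_sumr; apply: eq_bigr => t _.
by rewrite exprS mulrA.
Qed.

Lemma Gr1 (R : realType) (X : finType) (lab : X -> R) k :
  (0 < #|X|)%N -> Gr lab k (fun _ => 1) = 1.
Proof.
move=> X0; elim: k => [|k IH] //=.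
rewrite (eq_bigr (fun _ => #|X|%:R^-1)); last by move=> x _; rewrite IH mulr1.
have hN : (#|X|%:R : R) != 0 by rewrite pnatr_eq0 -lt0n.
by rewrite sumr_const (_ : #|xpredT| = #|X|) // -[RHS](mulVf hN) [in RHS]mulr_natr.
Qed.

Lemma allseqs_size (X : finType) k t : t \in allseqs X k -> size t = k.
Proof.
elim: k t => [|k IH] t /=; first by rewrite inE => /eqP->.
by case/allpairsPdep => x [u [_ uin ->]] /=; rewrite (IH _ uin).
Qed.

Definition flip (X : finType) (t : seq X) (s : {ffun X -> bool}) : {ffun X -> bool} :=
  [ffun x => if x \in t then s x else ~~ s x].

Lemma flipK (X : finType) (t : seq X) : involutive (flip t).
Proof.
move=> s; apply/ffunP => x; rewrite !ffunE; case: (x \in t) => //.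
exact: negbK.
Qed.

Definition sgnb (R : realType) (b : bool) : R := if b then 1 else -1.
Definition ind (R : realType) (b : bool) : R := if b then 1 else 0.

Lemma samp_flip (R : realType) (X : finType) (t : seq X) (s : {ffun X -> bool}) :
  samp (fun x => sgnb R (flip t s x)) t = samp (fun x => sgnb R (s x)) t.
Proof. by rewrite /samp; apply/eq_in_map => x xt; rewrite ffunE xt. Qed.

Lemma corr_mk (R : realType) (X : finType) (lab : X -> R) h :
  corr (mkdist lab) h = (\sum_x #|X|%:R^-1 * (lab x * h x))%:E.
Proof.
rewrite /corr /expect -sumEFin; apply: eq_bigr => x _ /=.
rewrite (@dirac_int R (lab x) (fun y => y * h x)) ?EFinM //.
exact: mulrr_measurable.
Qed.

Lemma gcorr_mk (R : realType) (X : finType) (lab : X -> R) (c : X -> R) :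
  gcorr (mkdist lab) (fun x => Some (c x)) = (\sum_x #|X|%:R^-1 * (lab x * c x))%:E.
Proof.
rewrite /gcorr /expect -sumEFin; apply: eq_bigr => x _ /=.
rewrite (@dirac_int R (lab x) (fun y => y * c x)) ?EFinM //.
exact: mulrr_measurable.
Qed.

Lemma sum_c (R : realType) (X : finType) : (0 < #|X|)%N ->
  \sum_(x : X) (#|X|%:R : R)^-1 = 1.
Proof.
move=> X0; have hN : (#|X|%:R : R) != 0 by rewrite pnatr_eq0 -lt0n.
by rewrite sumr_const (_ : #|xpredT| = #|X|) // -[RHS](mulVf hN) [in RHS]mulr_natr.
Qed.

Lemma pair_contra (R : realType) (X : finType) (m n : nat) (eps : R)
    (t : seq X) (s : {ffun X -> bool}) (h : X -> R) :
  #|X| = (2 * m)%N -> (0 < m)%N -> size t = n -> n%:R < (1/2 - eps) * m%:R ->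
  (forall x, -1 <= h x <= 1) ->
  \sum_x #|X|%:R^-1 * (sgnb R (s x) * ind R (s x)) - eps
     <= \sum_x #|X|%:R^-1 * (sgnb R (s x) * h x) ->
  \sum_x #|X|%:R^-1 * (sgnb R (flip t s x) * ind R (flip t s x)) - eps
     <= \sum_x #|X|%:R^-1 * (sgnb R (flip t s x) * h x) -> False.
Proof.
move=> HX m0 st Hlt hb H1 H2.
set c := (#|X|%:R : R)^-1.
have X0 : (0 < #|X|)%N by rewrite HX muln_gt0 m0.
have c0 : 0 <= c by rewrite invr_ge0.
have key : \sum_x c * (1 - 3 * ind R (x \in t)) <= 2 * eps.
  apply: le_trans (_ : \sum_x c * ((sgnb R (s x) * ind R (s x) - sgnb R (s x) * h x)
     + (sgnb R (flip t s x) * ind R (flip t s x) - sgnb R (flip t s x) * h x)) <= _).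
    apply: ler_sum => x _; rewrite ler_pM2l ?invr_gt0 ?ltr0n //; rewrite /flip ffunE /sgnb /ind.
    have := hb x; case: (x \in t); case: (s x) => /= /andP[hl hu]; lra.
  under eq_bigr do rewrite mulrDr !mulrBr.
  rewrite big_split /= !sumrB; lra.
have E : \sum_x c * (1 - 3 * ind R (x \in t)) = 1 - 3 * (c * \sum_x ind R (x \in t)).
  rewrite (eq_bigr (fun x => c - 3 * (c * ind R (x \in t)))); last by move=> x _; ring.
  by rewrite sumrB sum_c // -!mulr_sumr.
have hS : \sum_x ind R (x \in t) <= n%:R.
  rewrite (eq_bigr (fun x => if x \in t then 1 else 0)) // -big_mkcond /=.
  rewrite sumr_const ler_nat -st; exact: card_size.
have hcm : c * m%:R = 1/2.
  rewrite /c HX natrM; field.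
  by rewrite pnatr_eq0 -lt0n m0.
have q1 : c * \sum_x ind R (x \in t) <= c * n%:R by apply: ler_wpM2l.
have q2 : c * n%:R < (1/2 - eps) * (1/2).
  have cp : 0 < c by rewrite invr_gt0 ltr0n.
  apply: lt_le_trans (_ : c * ((1/2 - eps) * m%:R) <= _); first by rewrite ltr_pM2l.
  by rewrite mulrCA hcm.
have q3 : 0 <= c * n%:R by rewrite mulr_ge0.
rewrite E in key.
move: key q1 q2 q3; move: (c * \sum_x ind R (x \in t)) (c * n%:R) => a b.
clear; move=> *; lra.
Qed.

Lemma count_half (R : realType) (X : finType) (t : seq X)
    (P : {ffun X -> bool} -> bool) :
  (forall s, P s -> P (flip t s) -> False) ->
  \sum_(s : {ffun X -> bool}) ind R (P s) <= #|{ffun X -> bool}|%:R / 2.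
Proof.
move=> H.
have E : \sum_(s : {ffun X -> bool}) ind R (P s) =
         \sum_(s : {ffun X -> bool}) ind R (P (flip t s)).
  exact: (reindex_inj (inv_inj (flipK t))).
have H2 : \sum_(s : {ffun X -> bool}) (ind R (P s) + ind R (P (flip t s)))
          <= \sum_(s : {ffun X -> bool}) 1.
  apply: ler_sum => s _; have := H s; rewrite /ind.
  case: (P s); case: (P (flip t s)) => hh; try (exfalso; exact: (hh isT isT)); lra.
move: H2; rewrite big_split /= -E sumr_const (_ : #|xpredT| = #|{ffun X -> bool}|) //.
move: (\sum_(s : {ffun X -> bool}) ind R (P s)) => a.
move: (#|{ffun X -> bool}|) => K; move=> *; lra.
Qed.

Lemma part2 (R : realType) (X : finType) (m : nat) :
  (0 < m)%N -> #|X| = (2 * m)%N ->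
  (forall eps delta : R, 0 < eps < 1/2 -> 0 < delta < 1/2 ->
     forall n : nat, DCorM (@unif R X) n (@cubepm R X) (@cube01 R X) eps delta ->
       (1/2 - eps) * m%:R <= n%:R).
Proof.
move=> m0 HX eps delta /andP[e0 e1] /andP[d0 d1] n [L [valL H]].
rewrite leNgt; apply/negP => Hlt.
have X0 : (0 < #|X|)%N by rewrite HX muln_gt0 m0.
set c := (#|X|%:R : R)^-1.
pose lab (s : {ffun X -> bool}) x := sgnb R (s x).
pose succ s u := (ereal_sup [set gcorr (mkdist (lab s)) b | b in @cube01 R X]
   - eps%:E <= corr (mkdist (lab s)) (L (samp (lab s) u)))%E.
have Hs : forall s, 1 - delta <= \sum_(u <- allseqs X n) c^+n * ind R (succ s u).
  move=> s.
  have isd : is_dist (mkdist (lab s)).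
    split; first by move=> x; rewrite /= /unif invr_ge0.
    split; first exact: sum_c.
    move=> x /=; rewrite /dprob diracE mem_set //= /lab /sgnb.
    by case: (s x); apply/andP; split; lra.
  have Hex : exists2 s0, @cubepm R X s0 & agree_prob (mkdist (lab s)) s0 = 1%E.
    exists (fun x => Some (lab s x)).
      by move=> x; rewrite /lab /sgnb; case: (s x); auto.
    rewrite /agree_prob.
    rewrite (eq_bigr (fun x => (c%:E * 1)%E)); last first.
      by move=> x _; rewrite /= /dprob diracE mem_set.
    by rewrite sumEFin; under eq_bigr do rewrite mulr1; rewrite sum_c.
  have Hp := H (mkdist (lab s)) isd (fun x => erefl) Hex.
  have := le_trans Hp (@sampleE_le R X (lab s) n (fun t => (((ereal_sup
     [set gcorr (mkdist (lab s)) b | b in @cube01 R X] - eps%:E <=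
     corr (mkdist (lab s)) (L t))%E : bool)%:R : R)) (fun t => ler0n _ _)).
  rewrite lee_fin Gr_closed => Hq; apply: (le_trans Hq).
  apply: ler_sum => u _; rewrite /ind /succ.
  by case: ifP => _; rewrite /= ?mulr1n ?mulr0n; exact: lexx.
have Hpair : forall u, u \in allseqs X n -> forall s,
    succ s u -> succ (flip u s) u -> False.
  move=> u uin s S1 S2.
  have su := allseqs_size uin.
  have hb := valL (samp (lab s) u).
  have R1 : forall s', samp (lab s') u = samp (lab s) u -> succ s' u ->
      \sum_x c * (sgnb R (s' x) * ind R (s' x)) - eps
        <= \sum_x c * (sgnb R (s' x) * L (samp (lab s) u) x).
    move=> s' es'; rewrite /succ es' corr_mk => Hsu.
    have Hg : (gcorr (mkdist (lab s')) (fun x => Some (ind R (s' x))) <=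
               ereal_sup [set gcorr (mkdist (lab s')) b | b in @cube01 R X])%E.
      apply: ereal_sup_ubound; exists (fun x => Some (ind R (s' x))) => //.
      by move=> x; rewrite /ind; case: (s' x); auto.
    rewrite gcorr_mk in Hg.
    rewrite -lee_fin EFinB; apply: le_trans Hsu.
    exact: leeB Hg (lexx _).
  apply: (@pair_contra R X m n eps u s (L (samp (lab s) u)) HX m0 su Hlt hb).
    exact: R1 s erefl S1.
  by apply: R1 (flip u s) _ S2; exact: samp_flip.
have Hsum : \sum_(s : {ffun X -> bool}) (1 - delta) <=
    \sum_(s : {ffun X -> bool}) \sum_(u <- allseqs X n) c^+n * ind R (succ s u).
  by apply: ler_sum => s _; exact: Hs s.
rewrite exchange_big /= in Hsum.
set K := #|{ffun X -> bool}|.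
have Hb : \sum_(u <- allseqs X n) \sum_(s : {ffun X -> bool}) c^+n * ind R (succ s u)
    <= \sum_(u <- allseqs X n) c^+n * (K%:R / 2).
  rewrite !(big_seq _ _ (allseqs X n)); apply: ler_sum => u uin; rewrite -mulr_sumr; apply: ler_wpM2l.
    by rewrite exprn_ge0 // invr_ge0.
  apply: (@count_half R X u (fun s => succ s u)) => s /=; exact: Hpair u uin s.
have Hone := @Gr_closed R X (fun _ => 0) n (fun _ => 1).
rewrite Gr1 // in Hone.
have Hc : \sum_(u <- allseqs X n) c^+n * (K%:R / 2) = K%:R / 2.
  rewrite (eq_bigr (fun u => c^+n * 1 * (K%:R / 2))); last by move=> u _; rewrite mulr1.
  by rewrite -mulr_suml -Hone mul1r.
have K0 : (0 < K)%N by rewrite /K card_ffun card_bool expn_gt0.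
rewrite Hc in Hb; have := le_trans Hsum Hb.
rewrite sumr_const (_ : #|xpredT| = K) // -[(1 - delta) *+ K]mulr_natr.
have : (0 : R) < K%:R by rewrite ltr0n.
move: (K%:R) => a ha hh; move: d1 ha hh; clear; move=> *; nra.
Qed.
Theorem lemmaC2 (R : realType) (X : finType) (m : nat) :
  (0 < m)%N -> #|X| = (2 * m)%N ->
  (forall eps delta : R, 0 <= eps -> 0 <= delta ->
     least_samples (fun n => CorM n (@cube01 R X) (@cubepm R X) eps delta) 0)
  /\
  (forall eps delta : R, 0 < eps < 1/2 -> 0 < delta < 1/2 ->
     forall n : nat, DCorM (@unif R X) n (@cubepm R X) (@cube01 R X) eps delta ->
       (1/2 - eps) * m%:R <= n%:R).
Proof.
move=> m0 HX; split.
  by move=> eps delta e0 d0; exact: (@part1 R X eps delta e0 d0).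
exact: (@part2 R X m m0 HX).
Qed.
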